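(* Let $n,d,T$ be positive integers and let $\mathbf{s}_1,\dots,\mathbf{s}_T\in\mathbb{R}^n$ be fixed vectors. For an invertible matrix $\mathbf{A}\in\mathbb{R}^{n\times n}$, set $\mathbf{x}_t=\mathbf{A}\mathbf{s}_t$ for $t=1,\dots,T$, and define $$\widehat{\mathbf{M}}_d(\mathbf{A})=\frac{1}{T}\sum_{t=1}^T [\mathbf{x}_t]_d[\mathbf{x}_t]_d^{\top},\qquad \theta_t(\mathbf{A})=[\mathbf{x}_t]_d^{\top}\big(\widehat{\mathbf{M}}_d(\mathbf{A})\big)^{-1}[\mathbf{x}_t]_d,\quad t=1,\dots,T.$$ Assume that $\widehat{\mathbf{M}}_d(\mathbf{I}_n)=\frac{1}{T}\sum_{t=1}^T[\mathbf{s}_t]_d[\mathbf{s}_t]_d^{\top}$ is invertible. Then the scores $(\theta_t(\mathbf{A}))_{t=1}^T$ take values independent of $\mathbf{A}$: for every invertible $\mathbf{A}\in\mathbb{R}^{n\times n}$, $\widehat{\mathbf{M}}_d(\mathbf{A})$ is invertible and $\theta_t(\mathbf{A})=\theta_t(\mathbf{I}_n)=[\mathbf{s}_t]_d^{\top}\big(\widehat{\mathbf{M}}_d(\mathbf{I}_n)\big)^{-1}[\mathbf{s}_t]_d$ for all $t\in\{1,\dots,T\}$.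
   Context: For $\mathbf{x}=(x_1,\dots,x_n)^{\top}\in\mathbb{R}^n$ and $d\in\mathbb{N}$, $[\mathbf{x}]_d$ denotes the column vector of all monomials $x_1^{\alpha_1}\cdots x_n^{\alpha_n}$ of total degree $\alpha_1+\dots+\alpha_n\le d$ (listed in a fixed order), which is a basis of the polynomials in $\mathbf{x}$ of degree at most $d$; its length is $\binom{n+d}{n}$. $\mathbf{I}_n$ is the $n\times n$ identity matrix. *)

(* Defs.v *)
From HB Require Import structures.
From mathcomp Require Import all_boot all_order all_algebra.
From mathcomp Require Import reals.
Set Implicit Arguments. Unset Strict Implicit. Unset Printing Implicit Defensive.
Import Order.TTheory GRing.Theory Num.Theory.
Local Open Scope ring_scope.

(* Exponent vectors alpha = (alpha_1,...,alpha_n) of total degree <= d.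
   Each alpha_j <= d, so alpha is a finite function 'I_n -> 'I_d.+1. *)
Definition monexp (n d : nat) : finType :=
  {a : {ffun 'I_n -> 'I_d.+1} | (\sum_(j < n) (a j : nat) <= d)%N}.

Definition nmon (n d : nat) : nat := #|monexp n d|.

Definition mon_at (n d : nat) (i : 'I_(nmon n d)) : {ffun 'I_n -> 'I_d.+1} :=
  val (enum_val i).

Definition monvec {R : comRingType} (n d : nat) (x : 'cV[R]_n) : 'cV[R]_(nmon n d) :=
  \col_(i < nmon n d) \prod_(j < n) x j 0 ^+ (mon_at i j : nat).

Definition Mhat {R : fieldType} (n d T : nat) (x : 'I_T -> 'cV[R]_n)
  : 'M[R]_(nmon n d) :=
  (T%:R)^-1 *: \sum_(t < T) (monvec d (x t) *m (monvec d (x t))^T).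

Definition theta {R : fieldType} (n d T : nat) (x : 'I_T -> 'cV[R]_n) (t : 'I_T) : R :=
  ((monvec d (x t))^T *m invmx (Mhat d x) *m monvec d (x t)) 0 0.

(* Main.v *)
Require Import Defs.
From HB Require Import structures.
From mathcomp Require Import all_boot all_order all_algebra.
From mathcomp Require Import reals.
Set Implicit Arguments. Unset Strict Implicit. Unset Printing Implicit Defensive.
Import Order.TTheory GRing.Theory Num.Theory.
Local Open Scope ring_scope.

Section Poly.
Variables (R : comNzRingType) (n d : nat).

Definition mono (a : monexp n d) (x : 'cV[R]_n) : R :=
  \prod_(j < n) x j 0 ^+ (val a j : nat).
Definition deg (a : monexp n d) : nat := (\sum_(j < n) (val a j : nat))%N.

Definition isP (e : nat) (f : 'cV[R]_n -> R) :=
  exists c : monexp n d -> R, (forall a, (e < deg a)%N -> c a = 0) /\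
    forall x, f x = \sum_a c a * mono a x.

Lemma deg_le (a : monexp n d) : (deg a <= d)%N.
Proof. exact: (valP a). Qed.

Lemma isP_ext e f g : (forall x, f x = g x) -> isP e f -> isP e g.
Proof. move=> fg [c [h1 h2]]; exists c; split=> // x; by rewrite -fg. Qed.

Lemma isP_le e e' f : (e <= e')%N -> isP e f -> isP e' f.
Proof.
move=> ee [c [h1 h2]]; exists c; split=> // a ha; apply: h1.
exact: leq_trans ha.
Qed.

Lemma isP_add e f g : isP e f -> isP e g -> isP e (fun x => f x + g x).
Proof.
move=> [c [h1 h2]] [c' [h1' h2']]; exists (fun a => c a + c' a); split.
  by move=> a ha; rewrite h1 // h1' // addr0.
move=> x; rewrite h2 h2' -big_split /=; apply: eq_bigr => a _; by rewrite mulrDl.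
Qed.

Lemma isP_scale e k f : isP e f -> isP e (fun x => k * f x).
Proof.
move=> [c [h1 h2]]; exists (fun a => k * c a); split.
  by move=> a ha; rewrite h1 // mulr0.
move=> x; rewrite h2 mulr_sumr; apply: eq_bigr => a _; by rewrite mulrA.
Qed.

Lemma isP_0 e : isP e (fun _ => 0).
Proof.
exists (fun _ => 0); split=> // x; by rewrite big1 // => a _; rewrite mul0r.
Qed.

Lemma isP_sum e (F : 'I_n -> 'cV[R]_n -> R) (s : seq 'I_n) :
  (forall k, isP e (F k)) -> isP e (fun x => \sum_(k <- s) F k x).
Proof.
move=> hF; elim: s => [|k s IH].
  by apply: isP_ext (isP_0 e) => x; rewrite big_nil.
apply: isP_ext (isP_add (hF k) IH) => x; by rewrite big_cons.
Qed.

Lemma a0P : (\sum_(j < n) (([ffun _ => ord0] : {ffun 'I_n -> 'I_d.+1}) j : nat) <= d)%N.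
Proof. by rewrite big1 // => j _; rewrite ffunE. Qed.

Definition a0 : monexp n d :=
  @exist {ffun 'I_n -> 'I_d.+1} (fun a => (\sum_(j < n) (a j : nat) <= d)%N) _ a0P.

Lemma isP_1 : isP 0 (fun _ => 1).
Proof.
exists (fun a => (a == a0)%:R); split.
  move=> a ha; case: eqP => // ea; move: ha; rewrite ea /deg /=.
  by rewrite big1 // => j _; rewrite ffunE.
move=> x; rewrite (bigD1 a0) //= eqxx mul1r big1 ?addr0.
  by rewrite /mono big1 // => j _ /=; rewrite ffunE expr0.
by move=> a /negPf ->; rewrite mul0r.
Qed.

Definition addk (a : monexp n d) (k : 'I_n) : {ffun 'I_n -> 'I_d.+1} :=
  [ffun j => inord (val a j + (j == k))].

Definition sh (k : 'I_n) (a : monexp n d) : monexp n d := insubd a (addk a k).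

Lemma sum_delta (k : 'I_n) : (\sum_(j < n) (j == k : nat))%N = 1%N.
Proof.
rewrite (bigD1 k) //= eqxx big1 // => j /negPf ->; done.
Qed.

Lemma addk_val (a : monexp n d) k j : (deg a < d)%N ->
  (addk a k j : nat) = (val a j + (j == k))%N.
Proof.
move=> ha; rewrite ffunE inordK // ltnS.
have : (val a j <= deg a)%N.
  by rewrite /deg (bigD1 j) //= leq_addr.
case: (j == k) => /= h; last by rewrite addn0; apply: leq_trans h (ltnW ha).
by rewrite addn1; apply: leq_ltn_trans h ha.
Qed.

Lemma sh_val (a : monexp n d) k : (deg a < d)%N -> val (sh k a) = addk a k.
Proof.
move=> ha; rewrite /sh val_insubd.
have -> : (\sum_(j < n) (addk a k j : nat) <= d)%N.
  rewrite (eq_bigr _ (fun j _ => addk_val k j ha)) big_split /= sum_delta.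
  by rewrite addn1.
by [].
Qed.

Lemma sh_deg (a : monexp n d) k : (deg a < d)%N -> deg (sh k a) = (deg a).+1.
Proof.
move=> ha; rewrite /deg sh_val //.
rewrite (eq_bigr _ (fun j _ => addk_val k j ha)) big_split /= sum_delta.
by rewrite addn1.
Qed.

Lemma sh_mono (a : monexp n d) k x : (deg a < d)%N ->
  mono (sh k a) x = x k 0 * mono a x.
Proof.
move=> ha; rewrite /mono sh_val //.
rewrite (eq_bigr _ (fun j _ => congr1 (fun m => x j 0 ^+ m) (addk_val k j ha))).
rewrite (eq_bigr _ (fun j _ => exprD _ _ _)) big_split /= mulrC; congr (_ * _).
rewrite (bigD1 k) //= eqxx expr1 big1 ?mulr1 // => j /negPf ->; by rewrite expr0.
Qed.

Lemma isP_mulx e k f : (e < d)%N -> isP e f -> isP e.+1 (fun x => x k 0 * f x).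
Proof.
move=> ed [c [h1 h2]].
exists (fun b => \sum_(a | sh k a == b) c a); split.
  move=> b hb; rewrite big1 // => a /eqP hab.
  case: (leqP (deg a) e) => ha; last exact: h1.
  move: hb; rewrite -hab sh_deg ?ltnS; last exact: leq_ltn_trans ha ed.
  by rewrite ltnNge ha.
move=> x; rewrite h2 mulr_sumr.
have -> : \sum_a x k 0 * (c a * mono a x) = \sum_a c a * mono (sh k a) x.
  apply: eq_bigr => a _; case: (leqP (deg a) e) => ha.
    by rewrite sh_mono ?(leq_ltn_trans ha ed) // mulrCA.
  by rewrite h1 // !mul0r mulr0.
rewrite (partition_big (sh k) xpredT) //=; apply: eq_bigr => b _.
rewrite mulr_suml; apply: eq_bigr => a /eqP ->; done.
Qed.

Lemma isP_lin e (l : 'I_n -> R) f : (e < d)%N -> isP e f ->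
  isP e.+1 (fun x => (\sum_(k < n) l k * x k 0) * f x).
Proof.
move=> ed hf.
have : isP e.+1 (fun x => \sum_(k <- index_enum 'I_n) l k * (x k 0 * f x)).
  apply: isP_sum => k; apply: isP_scale; exact: isP_mulx.
apply: isP_ext => x; rewrite mulr_suml; apply: eq_bigr => k _; by rewrite mulrA.
Qed.

Lemma isP_pow e m (l : 'I_n -> R) f : (e + m <= d)%N -> isP e f ->
  isP (e + m) (fun x => (\sum_(k < n) l k * x k 0) ^+ m * f x).
Proof.
move=> hm hf; elim: m hm => [|m IH] hm.
  by rewrite addn0; apply: isP_ext hf => x; rewrite expr0 mul1r.
have hm1 : (e + m < d)%N by rewrite -addnS.
rewrite addnS; apply: isP_ext (isP_lin l hm1 (IH (ltnW hm1))) => x.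
  by rewrite exprS mulrA.

Qed.

Lemma isP_monoA (A : 'M[R]_n) (b : monexp n d) :
  isP d (fun x => mono b (A *m x)).
Proof.
have H : forall s : seq 'I_n, (\sum_(j <- s) (val b j : nat) <= d)%N ->
  isP (\sum_(j <- s) (val b j : nat))%N
      (fun x => \prod_(j <- s) (\sum_(k < n) A j k * x k 0) ^+ (val b j : nat)).
  elim=> [|j s IH] hs.
    by rewrite big_nil; apply: isP_ext isP_1 => x; rewrite big_nil.
  move: hs; rewrite big_cons => hs.
  have hs' : (\sum_(j <- s) (val b j : nat) <= d)%N.
    by apply: leq_trans hs; rewrite leq_addl.
  have hs2 : (\sum_(j <- s) (val b j : nat) + val b j <= d)%N by rewrite addnC.
  rewrite addnC; apply: isP_ext (isP_pow (fun k => A j k) hs2 (IH hs')) => x.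
  by rewrite big_cons.
apply: isP_le (deg_le b) _.
apply: isP_ext (H (index_enum 'I_n) (deg_le b)) => x.
rewrite /mono; apply: eq_bigr => j _; by rewrite mxE.
Qed.

Lemma monvec_lin (A : 'M[R]_n) : exists P : 'M[R]_(nmon n d),
  forall x, monvec d (A *m x) = P *m monvec d x.
Proof.
have : forall i : 'I_(nmon n d), exists c : monexp n d -> R,
    forall x, mono (enum_val i) (A *m x) = \sum_a c a * mono a x.
  move=> i; have [c [_ h]] := isP_monoA A (enum_val i); by exists c.
case/fin_all_exists => c hc.
exists (\matrix_(i, i') c i (enum_val i')) => x.
apply/matrixP => i j; rewrite ord1 !mxE.
have := hc i x; rewrite /mono /mon_at => ->.
have E := big_enum_val (idx := 0 : R) (op := +%R) (A := monexp n d) (fun a => c i a * mono a x).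
rewrite /= in E. rewrite E.
apply: eq_bigr => i' _; by rewrite !mxE.
Qed.

End Poly.

Lemma Mhat_tr (R : fieldType) (n d T : nat) (x y : 'I_T -> 'cV[R]_n)
  (P : 'M[R]_(nmon n d)) :
  (forall t, monvec d (y t) = P *m monvec d (x t)) ->
  Mhat d y = P *m Mhat d x *m P^T.
Proof.
move=> hP; rewrite /Mhat -scalemxAr -scalemxAl; congr (_ *: _).
rewrite mulmx_sumr mulmx_suml; apply: eq_bigr => t _.
by rewrite hP trmx_mul !mulmxA.
Qed.

Theorem proposition1 (R : realType) (n d T : nat)
  (hn : (0 < n)%N) (hd : (0 < d)%N) (hT : (0 < T)%N)
  (s : 'I_T -> 'cV[R]_n)
  (hM : Mhat d (fun t => 1%:M *m s t) \in unitmx) :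
  forall A : 'M[R]_n, A \in unitmx ->
    Mhat d (fun t => A *m s t) \in unitmx /\
    forall t : 'I_T,
      theta d (fun t => A *m s t) t = theta d (fun t => 1%:M *m s t) t /\
      theta d (fun t => 1%:M *m s t) t =
        ((monvec d (s t))^T *m invmx (Mhat d s) *m monvec d (s t)) 0 0.
Proof.
move=> A hA.
have E1 : Mhat d (fun t => 1%:M *m s t) = Mhat d s.
  rewrite (@Mhat_tr _ _ _ _ s _ 1%:M) ?trmx1 ?mul1mx ?mulmx1 // => t.
  by rewrite !mul1mx.
have [P hP] := monvec_lin d A.
have [Q hQ] := monvec_lin d (invmx A).
set M := Mhat d s.
have HA : Mhat d (fun t => A *m s t) = P *m M *m P^T.
  by apply: Mhat_tr => t; rewrite hP.
have HM : M = (Q *m P) *m M *m (Q *m P)^T.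
  apply: Mhat_tr => t; by rewrite -mulmxA -hP -hQ mulmxA mulVmx // mul1mx.
have hMu : M \in unitmx by rewrite /M -E1.
have hPu : P \in unitmx.
  move: hMu; rewrite !unitmxE !unitfE => hMd.
  apply/eqP => hP0; move: hMd; have := congr1 determinant HM.
  by rewrite !det_mulmx det_tr det_mulmx hP0 !(mul0r, mulr0) => ->; rewrite eqxx.
have hPTu : P^T \in unitmx by rewrite unitmx_tr.
set N := P *m M *m P^T.
have hNu : N \in unitmx by rewrite /N !unitmx_mul hPu hMu hPTu.
split; first by rewrite HA.
move=> t; split; last by rewrite /theta E1 mul1mx.
rewrite /theta E1 HA -/N hP mul1mx.
set X := P^T *m invmx N *m P.
have XM : X *m M = 1%:M.
  rewrite -[X *m M](mulmxK hPTu).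
  have -> : X *m M *m P^T = P^T *m (invmx N *m N) by rewrite /X /N !mulmxA.
  by rewrite mulVmx // mulmx1 mulmxV.
have key : X = invmx M by rewrite -[X](mulmxK hMu) XM mul1mx.
by rewrite -key /X trmx_mul !mulmxA.
Qed.
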